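(* A rule defined on $\mathcal{E}_{\mathcal{SP}}$ satisfies own-peak-onliness, efficiency, peak responsiveness, and not obvious manipulability (NOM) if and only if it is a peak responsive simple rule.
   Context: Let $N=\{1,\dots,n\}$ be a finite set of agents. A preference $R_i$ is a continuous complete preorder on $\mathbb{R}_+\cup\{\infty\}$ ($P_i$ strict); its peak $p(R_i)$ is the set of maximal elements. $R_i$ is single-peaked if $p(R_i)$ is a singleton (identified with its element) and for $x,x'\in\mathbb{R}_+$, $xP_ix'$ whenever $x'<x\le p(R_i)$ or $p(R_i)\le x<x'$; $\mathcal{SP}$ is the set of these. An economy is $(R,\Omega)$, $R\in\mathcal{SP}^n$, $\Omega>0$; $\mathcal{E}_{\mathcal{SP}}$ is the set of economies; a rule is a map $\varphi:\mathcal{E}_{\mathcal{SP}}\to\mathbb{R}^n_+$ with $\sum_j\varphi_j(R,\Omega)=\Omega$. Properties: Efficiency: no $x\in\mathbb{R}^n_+$ with $\sum_jx_j=\Omega$ has $x_iR_i\varphi_i(R,\Omega)$ for all $i$ and $x_iP_i\varphi_i(R,\Omega)$ for some $i$. Own-peak-onliness: $p(R_i')=p(R_i)$ implies $\varphi_i(R,\Omega)=\varphi_i(R_i',R_{-i},\Omega)$. Peak responsiveness: for $i\ne j$, $p(R_i)\le p(R_j)$ implies $\varphi_i(R,\Omega)\le\varphi_j(R,\Omega)$. Option set $O^\varphi(R_i,\Omega)=\{\varphi_i(R_i,R_{-i},\Omega):R_{-i}\in\mathcal{SP}^{n-1}\}$; $R_i'$ is a manipulation at $(R_i,\Omega)$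 if $\varphi_i(R_i',R_{-i},\Omega)P_i\varphi_i(R_i,R_{-i},\Omega)$ for some $R_{-i}$, an obvious manipulation if moreover each $x'\in O^\varphi(R_i',\Omega)$ satisfies $x'P_ix$ for some $x\in O^\varphi(R_i,\Omega)$; NOM means no obvious manipulation exists. Simple rules: $z(R,\Omega)=\sum_jp(R_j)-\Omega$; agent $i$ is simple if ($z\ge0$ and $p(R_i)<\Omega/n$) or ($z\le0$ and $p(R_i)>\Omega/n$); $N^+$ is the set of simple agents, $N^-=N\setminus N^+$; $E(R,\Omega)=\left|\Omega-\left(\sum_{j\in N^+}p(R_j)+|N^-|\frac{\Omega}{n}\right)\right|$. An own-peak-only rule is simple if $\varphi_i=p(R_i)$ for $i\in N^+$, $\varphi_i=\frac{\Omega}{n}+\nu_i$ for $i\in N^-$ when $z\ge0$, $\varphi_i=\frac{\Omega}{n}-\nu_i$ for $i\in N^-$ when $z\le0$, with $0\le\nu_i\le|p(R_i)-\frac{\Omega}{n}|$ and $\sum_{j\in N^-}\nu_j=E(R,\Omega)$. *)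

(* Defs.v *)
From HB Require Import structures.
From mathcomp Require Import all_boot all_order all_algebra.
From mathcomp Require Import all_classical all_reals all_analysis.
Set Implicit Arguments. Unset Strict Implicit. Unset Printing Implicit Defensive.
Import Order.TTheory GRing.Theory Num.Theory.
Import numFieldNormedType.Exports.
Local Open Scope classical_set_scope.
Local Open Scope ring_scope.

Definition cspace (R : realType) : set (\bar R) := [set x | (0 <= x)%E].

Definition pref (R : realType) := \bar R -> \bar R -> Prop.

Definition strictP (R : realType) (Q : pref R) (x y : \bar R) : Prop :=
  Q x y /\ ~ Q y x.

Definition complete_preorder (R : realType) (Q : pref R) : Prop :=
  (forall x y, cspace x -> cspace y -> Q x y \/ Q y x) /\
  (forall x y z, cspace x -> cspace y -> cspace z -> Q x y -> Q y z -> Q x z).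

(* continuity: all upper and lower contour sets are closed in cspace
   (cspace is closed in \bar R, so closed in \bar R is the same). *)
Definition continuous_pref (R : realType) (Q : pref R) : Prop :=
  forall y, cspace y ->
    closed [set x | cspace x /\ Q x y] /\ closed [set x | cspace x /\ Q y x].

Definition peak_set (R : realType) (Q : pref R) : set (\bar R) :=
  [set x | cspace x /\ forall y, cspace y -> Q x y].

(* the peak, as an element (meaningful when the peak set is a singleton) *)
Definition peak (R : realType) (Q : pref R) : \bar R := xget 0%E (peak_set Q).

Definition single_peaked (R : realType) (Q : pref R) : Prop :=
  complete_preorder Q /\ continuous_pref Q /\
  exists p : \bar R, peak_set Q = [set p] /\
    (forall x x' : R, 0 <= x' -> x' < x -> (x%:E <= p)%E ->
        strictP Q x%:E x'%:E) /\
    (forall x x' : R, 0 <= x -> (p <= x%:E)%E -> x < x' ->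
        strictP Q x%:E x'%:E).

Definition profile (R : realType) (n : nat) := 'I_n -> pref R.

Definition sp_profile (R : realType) (n : nat) (Rp : profile R n) : Prop :=
  forall i, single_peaked (Rp i).

Definition economy (R : realType) (n : nat) (Rp : profile R n) (Om : R) : Prop :=
  sp_profile Rp /\ 0 < Om.

Definition upd (R : realType) (n : nat) (Rp : profile R n) (i : 'I_n) (Q : pref R)
  : profile R n := fun j => if j == i then Q else Rp j.

(* a candidate rule: total map; only its values on E_SP matter *)
Definition rule_fun (R : realType) (n : nat) := profile R n -> R -> 'I_n -> R.

Definition is_rule (R : realType) (n : nat) (phi : rule_fun R n) : Prop :=
  forall Rp Om, economy Rp Om ->
    (forall i, 0 <= phi Rp Om i) /\ \sum_(i < n) phi Rp Om i = Om.

Definition efficient (R : realType) (n : nat) (phi : rule_fun R n) : Prop :=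
  forall Rp Om, economy Rp Om ->
    ~ exists x : 'I_n -> R,
        (forall j, 0 <= x j) /\ \sum_(j < n) x j = Om /\
        (forall i, Rp i (x i)%:E (phi Rp Om i)%:E) /\
        (exists i, strictP (Rp i) (x i)%:E (phi Rp Om i)%:E).

Definition own_peak_only (R : realType) (n : nat) (phi : rule_fun R n) : Prop :=
  forall Rp Om i (Q : pref R), economy Rp Om -> single_peaked Q ->
    peak Q = peak (Rp i) -> phi Rp Om i = phi (upd Rp i Q) Om i.

Definition peak_responsive (R : realType) (n : nat) (phi : rule_fun R n) : Prop :=
  forall Rp Om (i j : 'I_n), economy Rp Om -> i != j ->
    (peak (Rp i) <= peak (Rp j))%E -> phi Rp Om i <= phi Rp Om j.

Definition option_set (R : realType) (n : nat) (phi : rule_fun R n) (i : 'I_n)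
  (Q : pref R) (Om : R) : set R :=
  [set y | exists Rp : profile R n, sp_profile Rp /\ y = phi (upd Rp i Q) Om i].

Definition manipulation (R : realType) (n : nat) (phi : rule_fun R n) (i : 'I_n)
  (Q Q' : pref R) (Om : R) : Prop :=
  single_peaked Q' /\
  exists Rp : profile R n, sp_profile Rp /\
    strictP Q (phi (upd Rp i Q') Om i)%:E (phi (upd Rp i Q) Om i)%:E.

Definition obvious_manipulation (R : realType) (n : nat) (phi : rule_fun R n)
  (i : 'I_n) (Q Q' : pref R) (Om : R) : Prop :=
  manipulation phi i Q Q' Om /\
  forall x', option_set phi i Q' Om x' ->
    exists x, option_set phi i Q Om x /\ strictP Q x'%:E x%:E.

Definition NOM (R : realType) (n : nat) (phi : rule_fun R n) : Prop :=
  forall (i : 'I_n) (Q Q' : pref R) (Om : R),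
    single_peaked Q -> 0 < Om -> ~ obvious_manipulation phi i Q Q' Om.

Definition zexcess (R : realType) (n : nat) (Rp : profile R n) (Om : R) : \bar R :=
  ((\sum_(j < n) peak (Rp j)) - Om%:E)%E.

Definition simple_agent (R : realType) (n : nat) (Rp : profile R n) (Om : R)
  (i : 'I_n) : Prop :=
  ((0 <= zexcess Rp Om)%E /\ (peak (Rp i) < (Om / n%:R)%:E)%E) \/
  ((zexcess Rp Om <= 0)%E /\ ((Om / n%:R)%:E < peak (Rp i))%E).

Definition simple_agentb (R : realType) (n : nat) (Rp : profile R n) (Om : R)
  (i : 'I_n) : bool := `[< simple_agent Rp Om i >].

Definition Eexcess (R : realType) (n : nat) (Rp : profile R n) (Om : R) : \bar R :=
  `| Om%:E - ((\sum_(j < n | simple_agentb Rp Om j) peak (Rp j))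
              + (#|[pred j | ~~ simple_agentb Rp Om j]|%:R * (Om / n%:R))%:E) |%E.

Definition simple_rule (R : realType) (n : nat) (phi : rule_fun R n) : Prop :=
  own_peak_only phi /\
  forall Rp Om, economy Rp Om ->
    (forall i, simple_agent Rp Om i -> (phi Rp Om i)%:E = peak (Rp i)) /\
    exists nu : 'I_n -> R,
      (forall i, ~ simple_agent Rp Om i ->
         0 <= nu i /\ ((nu i)%:E <= `| peak (Rp i) - (Om / n%:R)%:E |)%E) /\
      (\sum_(j < n | ~~ simple_agentb Rp Om j) nu j)%:E = Eexcess Rp Om /\
      ((0 <= zexcess Rp Om)%E ->
         forall i, ~ simple_agent Rp Om i -> phi Rp Om i = Om / n%:R + nu i) /\
      ((zexcess Rp Om <= 0)%E ->
         forall i, ~ simple_agent Rp Om i -> phi Rp Om i = Om / n%:R - nu i).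

(* Main.v *)
Require Import Defs.
From HB Require Import structures.
From mathcomp Require Import all_boot all_order all_algebra.
From mathcomp Require Import all_classical all_reals all_analysis.
From mathcomp Require Import lra.
Set Implicit Arguments. Unset Strict Implicit. Unset Printing Implicit Defensive.
Import Order.TTheory GRing.Theory Num.Theory.
Import numFieldNormedType.Exports.
Local Open Scope classical_set_scope.
Local Open Scope ring_scope.

Section S.
Variable R : realType.

Lemma peakE (Q : pref R) p : peak_set Q = [set p] -> peak Q = p.
Proof. by move=> H; rewrite /peak H; apply: xget_unique. Qed.

Lemma sp_peak (Q : pref R) : single_peaked Q -> peak_set Q = [set peak Q].
Proof. by case=> _ [_ [p [H _]]]; rewrite (peakE H). Qed.

Lemma sp_ge0 (Q : pref R) : single_peaked Q -> (0 <= peak Q)%E.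
Proof. move=> /sp_peak H; have : peak_set Q (peak Q) by rewrite H. by case. Qed.

Lemma sp_left (Q : pref R) : single_peaked Q -> forall x x' : R, 0 <= x' -> x' < x -> (x%:E <= peak Q)%E ->
        strictP Q x%:E x'%:E.
Proof. by case=> _ [_ [p [H [H1 _]]]]; rewrite (peakE H). Qed.

Lemma sp_right (Q : pref R) : single_peaked Q -> forall x x' : R, 0 <= x -> (peak Q <= x%:E)%E -> x < x' ->
        strictP Q x%:E x'%:E.
Proof. by case=> _ [_ [p [H [_ H1]]]]; rewrite (peakE H). Qed.

Lemma sp_refl (Q : pref R) x : single_peaked Q -> (0 <= x)%E -> Q x x.
Proof. by case=> [[H _] _] hx; case: (H x x hx hx). Qed.

Definition Qinf : pref R := fun x y => (y <= x)%E.

Lemma Qinf_sp : single_peaked Qinf /\ peak Qinf = +oo%E.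
Proof.
have PS : peak_set Qinf = [set +oo%E].
  apply/seteqP; split => x /=.
    move=> [_ H]; apply/eqP; rewrite eq_le leey /=; apply: H; exact: le0y.
  by move=> ->; split; [exact: le0y | move=> y _; rewrite /Qinf leey].
split; last exact: peakE.
split; first split.
- by move=> x y _ _; rewrite /Qinf; case/orP: (le_total x y) => ?; [right|left].
- by move=> x y z _ _ _ h1 h2; rewrite /Qinf; exact: le_trans h2 h1.
split.
- move=> y _; split.
  + exact: closedI (@closed_ereal_le_ereal R 0) (@closed_ereal_le_ereal R y).
  + exact: closedI (@closed_ereal_le_ereal R 0) (@closed_ereal_ge_ereal R y).
exists +oo%E; split => //; split.
- by move=> x x' _ h _; split; rewrite /Qinf lee_fin; [exact: ltW | apply/negP; rewrite -ltNge].
- by move=> x x' _; rewrite leNgt ltey.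
Qed.


Lemma divE_le (b v t s : R) : 0 < b -> (v <= b * (t - s)) = (s + v / b <= t).
Proof.
move=> hb; have hw : v / b * b = v by rewrite divfK // gt_eqF.
set w := v / b in hw *; rewrite -hw.
by apply/idP/idP => h; nra.
Qed.

Lemma divE_le2 (d v t s : R) : 0 < d -> (v <= d * (s - t)) = (t <= s - v / d).
Proof.
move=> hb; have hw : v / d * d = v by rewrite divfK // gt_eqF.
set w := v / d in hw *; rewrite -hw.
by apply/idP/idP => h; nra.
Qed.

Lemma divE_ge (b v t s : R) : 0 < b -> (b * (t - s) <= v) = (t <= s + v / b).
Proof.
move=> hb; have hw : v / b * b = v by rewrite divfK // gt_eqF.
set w := v / b in hw *; rewrite -hw.
by apply/idP/idP => h; nra.
Qed.

Lemma divE_ge2 (d v t s : R) : 0 < d -> (d * (s - t) <= v) = (s - v / d <= t).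
Proof.
move=> hb; have hw : v / d * d = v by rewrite divfK // gt_eqF.
set w := v / d in hw *; rewrite -hw.
by apply/idP/idP => h; nra.
Qed.

Lemma leNy_fin (v : R) : (v%:E <= -oo)%E = false.
Proof. by rewrite leNgt ltNyr. Qed.
Lemma ley_fin (v : R) : (+oo <= v%:E)%E = false.
Proof. by rewrite leNgt ltey. Qed.
Lemma le0Ny : (0 <= -oo :> \bar R)%E = false.
Proof. by rewrite leNgt ltNy0. Qed.

Definition ufam (s b d : R) (x : \bar R) : \bar R :=
  if x is r%:E then (Num.min (b * (r - s)) (d * (s - r)))%:E else -oo%E.
Definition Qfam s b d : pref R := fun x y => (ufam s b d y <= ufam s b d x)%E.

Lemma ufam_l s b d r : 0 < b -> 0 < d -> r <= s -> ufam s b d r%:E = (b * (r - s))%:E.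
Proof. by move=> hb hd hr /=; congr EFin; apply: min_l; nra. Qed.

Lemma ufam_r s b d r : 0 < b -> 0 < d -> s <= r -> ufam s b d r%:E = (d * (s - r))%:E.
Proof. by move=> hb hd hr /=; congr EFin; apply: min_r; nra. Qed.

Lemma Qfam_sp s b d : 0 < b -> 0 < d -> 0 <= s ->
  single_peaked (Qfam s b d) /\ peak (Qfam s b d) = s%:E.
Proof.
move=> hb hd hs.
have us : ufam s b d s%:E = 0%E by rewrite ufam_l // subrr mulr0.
have ule0 : forall x, (ufam s b d x <= 0)%E.
  case=> [r| |] //=; rewrite lee_fin; case: (leP r s) => h.
    by rewrite ge_min; apply/orP; left; nra.
  by rewrite ge_min; apply/orP; right; nra.
have PS : peak_set (Qfam s b d) = [set s%:E].
  apply/seteqP; split => x /=.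
    move=> [hx H]; have := H s%:E; rewrite /cspace /= lee_fin => /(_ hs).
    rewrite /Qfam us; case: x hx H => [r| |] //= hr _.
    rewrite lee_fin le_min => /andP [h1 h2]; congr EFin; nra.
  by move=> ->; split; [rewrite /cspace /= lee_fin | move=> y _; rewrite /Qfam us].
split; last exact: peakE.
split; first split.
- by move=> x y _ _; rewrite /Qfam; case/orP: (le_total (ufam s b d x) (ufam s b d y)) => ?; [right|left].
- by move=> x y z _ _ _ h1 h2; rewrite /Qfam; exact: le_trans h2 h1.
split.
- case=> [r| |] // hr; rewrite /Qfam.
  + pose v := Num.min (b * (r - s)) (d * (s - r)).
    have -> : ufam s b d r%:E = v%:E by [].
    split.
    * have -> : [set x | cspace x /\ (v%:E <= ufam s b d x)%E] =
        [set x : \bar R | 0 <= x]%E `&` [set x | (s + v / b)%:E <= x]%E `&` [set x | x <= (s - v / d)%:E]%E.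
        apply/seteqP; split => -[t| |]; rewrite /cspace /= ?leNy_fin ?ley_fin ?le0Ny ?leey //; try by case.
        1,2: rewrite !lee_fin le_min (@divE_le b v t s hb) (@divE_le2 d v t s hd).
        - by move=> [-> /andP[-> ->]].
        - by move=> [[-> ->] ->].
      apply: closedI; first apply: closedI; [exact: closed_ereal_le_ereal | exact: closed_ereal_le_ereal | exact: closed_ereal_ge_ereal].
    * have -> : [set x | cspace x /\ (ufam s b d x <= v%:E)%E] =
        [set x : \bar R | 0 <= x]%E `&` ([set x | x <= (s + v / b)%:E]%E `|` [set x | (s - v / d)%:E <= x]%E).
        apply/seteqP; split => -[t| |]; rewrite /cspace /= ?leNy_fin ?ley_fin ?le0Ny ?leey ?leNye //; try (by case); try (by move=> _; split => //; right).
        1,2: rewrite !lee_fin ge_min (@divE_ge b v t s hb) (@divE_ge2 d v t s hd).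
        - by move=> [-> /orP[->|->]]; split => //; [left|right].
        - by move=> [-> [->|->]]; rewrite ?orbT.
      apply: closedI; first exact: closed_ereal_le_ereal.
      by apply: closedU; [exact: closed_ereal_ge_ereal | exact: closed_ereal_le_ereal].
  + split.
    * have -> : [set x | cspace x /\ (ufam s b d +oo%E <= ufam s b d x)%E] = [set x : \bar R | 0 <= x]%E.
        by apply/seteqP; split => x /=; [case | move=> h; split; [exact: h | exact: leNye]].
      exact: closed_ereal_le_ereal.
    * have -> : [set x | cspace x /\ (ufam s b d x <= ufam s b d +oo%E)%E] = [set x : \bar R | +oo <= x]%E.
        apply/seteqP; split => -[t| |] //=; rewrite /cspace /= ?leNy_fin ?le0Ny //; try by case.
      exact: closed_ereal_le_ereal.
exists s%:E; split => //; split.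
- move=> x x' hx' hlt; rewrite lee_fin => hxs; rewrite /strictP /Qfam.
  rewrite !ufam_l //; last by rewrite (le_trans (ltW hlt)).
  by rewrite !lee_fin; split; [|apply/negP]; nra.
- move=> x x' hx; rewrite lee_fin => hxs hlt; rewrite /strictP /Qfam.
  rewrite !ufam_r //; last by rewrite (le_trans hxs (ltW hlt)).
  by rewrite !lee_fin; split; [|apply/negP]; nra.
Qed.


Lemma fin_between (x : \bar R) (r : R) : (0 <= x)%E -> (x <= r%:E)%E -> x = (fine x)%:E.
Proof. by case: x => [t| |] //=; rewrite ?ley_fin ?le0Ny. Qed.

Section Rule.
Variables (n : nat) (phi : rule_fun R n).
Hypothesis Hr : is_rule phi.

Lemma upd_same (Rp : profile R n) i Q : upd Rp i Q i = Q.
Proof. by rewrite /upd eqxx. Qed.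

Lemma sp_upd (Rp : profile R n) i Q : sp_profile Rp -> single_peaked Q -> sp_profile (upd Rp i Q).
Proof. by move=> H HQ j; rewrite /upd; case: (j == i). Qed.

Lemma econ_upd (Rp : profile R n) Om i Q : economy Rp Om -> single_peaked Q -> economy (upd Rp i Q) Om.
Proof. by case=> H1 H2 HQ; split => //; exact: sp_upd. Qed.

Lemma phi_ge0 Rp Om i : economy Rp Om -> 0 <= phi Rp Om i.
Proof. by move=> /Hr [H _]. Qed.

Lemma phi_leOm Rp Om i : economy Rp Om -> phi Rp Om i <= Om.
Proof.
move=> E; have [H1 H2] := Hr E.
by rewrite -{2}H2 (bigD1 i) //= lerDl sumr_ge0.
Qed.

Lemma n_gt0 (i : 'I_n) : (0 < n)%N.
Proof. exact: (leq_ltn_trans (leq0n _) (ltn_ord i)). Qed.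

Lemma avg_ge Rp Om i : economy Rp Om -> peak_responsive phi ->
  (forall j, (peak (Rp j) <= peak (Rp i))%E) -> Om / n%:R <= phi Rp Om i.
Proof.
move=> E PR Hj.
have hn : (0 < n%:R :> R) by rewrite ltr0n (n_gt0 i).
rewrite ler_pdivrMr //.
have [_ HS] := Hr E.
rewrite -{1}HS mulr_natr -[X in _ *+ X](card_ord n) -sumr_const; apply: ler_sum => j _.
case: (eqVneq j i) => [->|hji] //; exact: PR Rp Om j i E hji (Hj j).
Qed.

Lemma avg_le Rp Om i : economy Rp Om -> peak_responsive phi ->
  (forall j, (peak (Rp i) <= peak (Rp j))%E) -> phi Rp Om i <= Om / n%:R.
Proof.
move=> E PR Hj.
have hn : (0 < n%:R :> R) by rewrite ltr0n (n_gt0 i).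
rewrite ler_pdivlMr //.
have [_ HS] := Hr E.
rewrite -[X in _ <= X]HS mulr_natr -[X in _ *+ X](card_ord n) -sumr_const; apply: ler_sum => j _.
case: (eqVneq i j) => [->|hji] //; exact: PR Rp Om i j E hji (Hj j).
Qed.

Lemma transfer Rp Om i j : economy Rp Om -> efficient phi ->
  ((phi Rp Om i)%:E < peak (Rp i))%E -> (peak (Rp j) < (phi Rp Om j)%:E)%E -> False.
Proof.
move=> E EF hi hj.
set f := phi Rp Om in hi hj.
have hij : i != j.
  by apply/eqP => eij; move: hi hj; rewrite eij => h1 h2; have := lt_trans h1 h2; rewrite ltxx.
have spj := E.1 j; have pj0 := sp_ge0 spj.
have spi := E.1 i.
have [rj Erj] : exists rj, peak (Rp j) = rj%:E.
  move: pj0 hj; case: (peak (Rp j)) => [t| |] //= _; first by exists t.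
rewrite Erj lte_fin in hj; rewrite Erj lee_fin in pj0.
have fi0 : 0 <= f i by exact: phi_ge0.
have [e [he0 [hei hej]]] : exists e, 0 < e /\ ((f i + e)%:E <= peak (Rp i))%E /\ rj <= f j - e.
  move: hi; case: (peak (Rp i)) => [ri| |] //= hi.
  - exists (Num.min (f j - rj) (ri - f i)); rewrite lte_fin in hi.
    rewrite lt_min !subr_gt0 hj hi lee_fin; split => //.
    have h1 : Num.min (f j - rj) (ri - f i) <= f j - rj by rewrite ge_min lexx.
    have h2 : Num.min (f j - rj) (ri - f i) <= ri - f i by rewrite ge_min lexx orbT.
    split; lra.
  - exists (f j - rj); rewrite subr_gt0 hj leey; split => //; split => //; lra.
pose x k := f k + (if k == i then e else 0) - (if k == j then e else 0).
have xi : x i = f i + e by rewrite /x eqxx (negbTE hij) subr0.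
have xj : x j = f j - e by rewrite /x eq_sym (negbTE hij) eqxx addr0.
have xk : forall k, k != i -> k != j -> x k = f k.
  by move=> k h1 h2; rewrite /x (negbTE h1) (negbTE h2) addr0 subr0.
apply: (EF Rp Om E); exists x; split.
  move=> k; case: (eqVneq k i) => [->|h1]; first by rewrite xi addr_ge0 // ltW.
  case: (eqVneq k j) => [->|h2]; first by rewrite xj (le_trans pj0).
  by rewrite xk //; exact: phi_ge0.
split.
  have [_ HS] := Hr E.
  rewrite -[RHS]HS /x sumrB big_split /= -!big_mkcond /= !big_pred1_eq /=.
  by rewrite addrK.
split.
  move=> k; case: (eqVneq k i) => [->|h1].
    have hlt : f i < f i + e by rewrite ltrDl.
    by rewrite xi; case: (sp_left spi fi0 hlt hei).
  case: (eqVneq k j) => [->|h2].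
    rewrite xj; have := @sp_right _ spj (f j - e) (f j).
    by rewrite Erj lee_fin gtrDl oppr_lt0 he0 => /(_ (le_trans pj0 hej) hej isT) [].
  by rewrite xk //; apply: sp_refl (E.1 k) _; rewrite lee_fin; exact: phi_ge0.
exists i; rewrite xi; apply: (sp_left spi fi0) => //; by rewrite ltrDl.
Qed.


Lemma eff_up (Rp : profile R n) Om i : economy Rp Om -> efficient phi -> (0 <= zexcess Rp Om)%E ->
  ((phi Rp Om i)%:E <= peak (Rp i))%E.
Proof.
move=> E EF hz; rewrite leNgt; apply/negP => hi.
have [j hj] : exists j, ((phi Rp Om j)%:E < peak (Rp j))%E.
  apply: contrapT => hne.
  have hall : forall j, (peak (Rp j) <= (phi Rp Om j)%:E)%E.
    by move=> j; rewrite leNgt; apply/negP => h; apply: hne; exists j.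
  have hfin : forall j, peak (Rp j) = (fine (peak (Rp j)))%:E.
    by move=> j; apply: fin_between (sp_ge0 (E.1 j)) (hall j).
  have [_ HS] := Hr E.
  move: hz; rewrite /zexcess (eq_bigr _ (fun j _ => hfin j)) sumEFin -EFinB lee_fin subr_ge0.
  apply/negP; rewrite -ltNge -[X in _ < X]HS.
  rewrite (bigD1 i) //= [X in _ < X](bigD1 i) //=.
  apply: ltr_leD.
  - by have := hi; rewrite {1}hfin lte_fin.
  - by apply: ler_sum => k _; have := hall k; rewrite {1}hfin lee_fin.
exact: (transfer E EF hj hi).
Qed.

Lemma zle0_fin (Rp : profile R n) Om : economy Rp Om -> (zexcess Rp Om <= 0)%E ->
  forall j, peak (Rp j) = (fine (peak (Rp j)))%:E.
Proof.
move=> E hz j.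
have h0 : forall k, (0 <= peak (Rp k))%E by move=> k; exact: sp_ge0 (E.1 k).
apply: (@fin_between _ Om (h0 j)).
have hle : (peak (Rp j) <= \sum_(k < n) peak (Rp k))%E.
  by rewrite (bigD1 j) //= leeDl // sume_ge0.
move: hz hle; rewrite /zexcess; case: (\sum_(k < n) peak (Rp k))%E => [s| |] //=.
- rewrite -EFinB lee_fin subr_le0 => h1 h2; apply: le_trans h2 _; by rewrite lee_fin.
- by move=> _ h; have := le_trans (h0 j) h; rewrite le0Ny.
Qed.

Lemma eff_down (Rp : profile R n) Om i : economy Rp Om -> efficient phi -> (zexcess Rp Om <= 0)%E ->
  (peak (Rp i) <= (phi Rp Om i)%:E)%E.
Proof.
move=> E EF hz; rewrite leNgt; apply/negP => hi.
have hfin := zle0_fin E hz.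
have [j hj] : exists j, (peak (Rp j) < (phi Rp Om j)%:E)%E.
  apply: contrapT => hne.
  have hall : forall j, ((phi Rp Om j)%:E <= peak (Rp j))%E.
    by move=> j; rewrite leNgt; apply/negP => h; apply: hne; exists j.
  have [_ HS] := Hr E.
  move: hz; rewrite /zexcess (eq_bigr _ (fun j _ => hfin j)) sumEFin -EFinB lee_fin subr_le0.
  apply/negP; rewrite -ltNge -[X in X < _]HS.
  rewrite (bigD1 i) //= [X in _ < X](bigD1 i) //=.
  apply: ltr_leD.
  - by have := hi; rewrite {1}hfin lte_fin.
  - by apply: ler_sum => k _; have := hall k; rewrite {1}hfin lee_fin.
exact: (transfer E EF hi hj).
Qed.


Lemma nom_up (Rp : profile R n) Om i : economy Rp Om -> own_peak_only phi -> peak_responsive phi ->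
  NOM phi -> ((phi Rp Om i)%:E < peak (Rp i))%E -> Om / n%:R <= phi Rp Om i.
Proof.
move=> E OPO PR NM hi.
have Om0 : 0 < Om := E.2.
have p0 := sp_ge0 (E.1 i).
move: p0 hi; case Ep: (peak (Rp i)) => [r| |] p0 hi; last first.
- by rewrite le0Ny in p0.
- by apply: avg_ge E PR _ => j; rewrite Ep leey.
rewrite leNgt; apply/negP => hlt.
set x0 := phi Rp Om i in hi hlt.
rewrite lte_fin in hi; rewrite lee_fin in p0.
have x00 : 0 <= x0 by exact: phi_ge0.
pose k := (r - x0) / (Om + 1).
have hO1 : 0 < Om + 1 by rewrite addr_gt0.
have hk1 : k * (Om + 1) = r - x0 by rewrite /k divfK // gt_eqF.
have hk : 0 < k by rewrite /k divr_gt0 // subr_gt0.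
have [Qsp Qpk] := @Qfam_sp r 1 k ltr01 hk p0.
set Q := Qfam r 1 k in Qsp Qpk.
have key : forall y, x0 < y -> y <= Om -> strictP Q y%:E x0%:E.
  move=> y h1 h2; rewrite /strictP /Q /Qfam.
  have ux0 : ufam r 1 k x0%:E = (1 * (x0 - r))%:E by apply: ufam_l => //; exact: ltW.
  have hu : (ufam r 1 k x0%:E < ufam r 1 k y%:E)%E.
    rewrite ux0; case: (leP y r) => hy.
    + by rewrite ufam_l // lte_fin; lra.
    + by rewrite ufam_r ?(ltW hy) // lte_fin; nra.
  by split; [exact: ltW | apply/negP; rewrite -ltNge].
have inf_rng : forall Rp', sp_profile Rp' ->
    Om / n%:R <= phi (upd Rp' i Qinf) Om i /\ phi (upd Rp' i Qinf) Om i <= Om.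
  move=> Rp' hsp.
  have E' : economy (upd Rp' i Qinf) Om by apply: econ_upd; [split | exact: Qinf_sp.1].
  split; last exact: phi_leOm.
  by apply: avg_ge E' PR _ => j; rewrite upd_same Qinf_sp.2 leey.
have opo : phi (upd Rp i Q) Om i = x0.
  by have := OPO Rp Om i Q E Qsp; rewrite Qpk Ep => /(_ erefl) <-.
apply: (NM i Q Qinf Om Qsp Om0); split.
  split; first exact: Qinf_sp.1.
  exists Rp; split; first exact: E.1.
  rewrite opo; have [h1 h2] := inf_rng Rp E.1; apply: key => //; lra.
move=> x' [Rp' [hsp ->]]; exists x0; split; first by exists Rp; split; [exact: E.1 | rewrite opo].
have [h1 h2] := inf_rng Rp' hsp; apply: key => //; lra.
Qed.

Lemma nom_down (Rp : profile R n) Om i : economy Rp Om -> own_peak_only phi -> peak_responsive phi ->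
  NOM phi -> (peak (Rp i) < (phi Rp Om i)%:E)%E -> phi Rp Om i <= Om / n%:R.
Proof.
move=> E OPO PR NM hi.
have Om0 : 0 < Om := E.2.
have p0 := sp_ge0 (E.1 i).
move: p0 hi; case Ep: (peak (Rp i)) => [r| |] p0 hi; last first.
- by rewrite le0Ny in p0.
- by rewrite ltNge leey in hi.
rewrite leNgt; apply/negP => hlt.
set x0 := phi Rp Om i in hi hlt.
rewrite lte_fin in hi; rewrite lee_fin in p0.
pose k := (x0 - r) / (r + 1).
have hO1 : 0 < r + 1 by rewrite ltr_wpDl.
have hk1 : k * (r + 1) = x0 - r by rewrite /k divfK // gt_eqF.
have hk : 0 < k by rewrite /k divr_gt0 // subr_gt0.
have [Qsp Qpk] := @Qfam_sp r k 1 hk ltr01 p0.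
set Q := Qfam r k 1 in Qsp Qpk.
have key : forall y, 0 <= y -> y < x0 -> strictP Q y%:E x0%:E.
  move=> y h1 h2; rewrite /strictP /Q /Qfam.
  have ux0 : ufam r k 1 x0%:E = (1 * (r - x0))%:E by apply: ufam_r => //; exact: ltW.
  have hu : (ufam r k 1 x0%:E < ufam r k 1 y%:E)%E.
    rewrite ux0; case: (leP y r) => hy.
    + by rewrite ufam_l // lte_fin; nra.
    + by rewrite ufam_r ?(ltW hy) // lte_fin; lra.
  by split; [exact: ltW | apply/negP; rewrite -ltNge].
have [Q0sp Q0pk] := @Qfam_sp 0 1 1 ltr01 ltr01 (lexx 0).
set Q0 := Qfam 0 1 1 in Q0sp Q0pk.
have zero_rng : forall Rp', sp_profile Rp' ->
    0 <= phi (upd Rp' i Q0) Om i /\ phi (upd Rp' i Q0) Om i <= Om / n%:R.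
  move=> Rp' hsp.
  have E' : economy (upd Rp' i Q0) Om by apply: econ_upd; [split | exact: Q0sp].
  split; first exact: phi_ge0.
  apply: avg_le E' PR _ => j; rewrite upd_same Q0pk; exact: sp_ge0 (sp_upd i hsp Q0sp j).
have opo : phi (upd Rp i Q) Om i = x0.
  by have := OPO Rp Om i Q E Qsp; rewrite Qpk Ep => /(_ erefl) <-.
apply: (NM i Q Q0 Om Qsp Om0); split.
  split; first exact: Q0sp.
  exists Rp; split; first exact: E.1.
  rewrite opo; have [h1 h2] := zero_rng Rp E.1; apply: key => //; lra.
move=> x' [Rp' [hsp ->]]; exists x0; split; first by exists Rp; split; [exact: E.1 | rewrite opo].
have [h1 h2] := zero_rng Rp' hsp; apply: key => //; lra.
Qed.


Lemma forward : own_peak_only phi -> efficient phi -> peak_responsive phi -> NOM phi ->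
  simple_rule phi.
Proof.
move=> OPO EF PR NM; split => // Rp Om E.
set m := Om / n%:R.
set f := phi Rp Om.
set z := zexcess Rp Om.
have F1 : forall i, (0 <= z)%E -> ((f i)%:E <= peak (Rp i))%E by move=> i; exact: eff_up.
have F2 : forall i, (z <= 0)%E -> (peak (Rp i) <= (f i)%:E)%E by move=> i; exact: eff_down.
have F3 : forall i, ((f i)%:E < peak (Rp i))%E -> m <= f i by move=> i; exact: nom_up.
have F4 : forall i, (peak (Rp i) < (f i)%:E)%E -> f i <= m by move=> i; exact: nom_down.
have NSup : forall i, (0 <= z)%E -> ~ simple_agent Rp Om i -> m <= f i /\ ((f i)%:E <= peak (Rp i))%E.
  move=> i hz hns; have hp : (m%:E <= peak (Rp i))%E.
    by rewrite leNgt; apply/negP => h; apply: hns; left.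
  split; last exact: F1.
  have := F1 i hz; rewrite le_eqVlt => /orP [/eqP he|]; last exact: F3.
  by move: hp; rewrite -he lee_fin.
have NSdown : forall i, (z <= 0)%E -> ~ simple_agent Rp Om i -> f i <= m /\ (peak (Rp i) <= (f i)%:E)%E.
  move=> i hz hns; have hp : (peak (Rp i) <= m%:E)%E.
    by rewrite leNgt; apply/negP => h; apply: hns; right.
  split; last exact: F2.
  have := F2 i hz; rewrite le_eqVlt => /orP [/eqP he|]; last exact: F4.
  by move: hp; rewrite he lee_fin.
have SIMP : forall i, simple_agent Rp Om i -> (f i)%:E = peak (Rp i).
  move=> i [[hz hp]|[hz hp]]; apply/eqP; rewrite eq_le.
  - rewrite F1 //= leNgt; apply/negP => h; have := F3 _ h.
    by have := lt_trans h hp; rewrite lte_fin /m => h1 h2; have := lt_le_trans h1 h2; rewrite ltxx.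
  - rewrite F2 // andbT leNgt; apply/negP => h; have := F4 _ h.
    by have := lt_trans hp h; rewrite lte_fin /m => h1 h2; have := le_lt_trans h2 h1; rewrite ltxx.
split; first exact: SIMP.
exists (fun i => `|f i - m|).
split.
  move=> i hns; split => //.
  have p0 := sp_ge0 (E.1 i).
  have [hz|hz] := leP 0%E z.
  - have [h1 h2] := NSup i hz hns.
    move: p0 h2; case: (peak (Rp i)) => [r| |] //= _.
    + rewrite lee_fin => h2; rewrite lee_fin !ger0_norm ?subr_ge0 //; lra.
    + by move=> _; rewrite leey.
  - have [h1 h2] := NSdown i (ltW hz) hns.
    move: p0 h2; case: (peak (Rp i)) => [r| |] //= _.
    + rewrite lee_fin => h2; rewrite lee_fin !ler0_norm ?subr_le0 //; lra.
split; last first.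
  split.
  - move=> hz i hns; have [h1 _] := NSup i hz hns.
    rewrite ger0_norm ?subr_ge0 //; lra.
  - move=> hz i hns; have [h1 _] := NSdown i hz hns.
    rewrite ler0_norm ?subr_le0 //; lra.
rewrite /Eexcess (eq_bigr (fun j => (f j)%:E)); last first.
  by move=> j /asboolP hj; rewrite SIMP.
rewrite sumEFin -EFinD abse_EFin -/m; congr EFin.
have [_ HS0] := Hr E.
change (\sum_(i < n) phi Rp Om i) with (\sum_(i < n) f i) in HS0.
have HT : Om - (\sum_(j < n | simple_agentb Rp Om j) f j + #|[pred j | ~~ simple_agentb Rp Om j]|%:R * m)
    = \sum_(j < n | ~~ simple_agentb Rp Om j) (f j - m).
  rewrite sumrB sumr_const -[X in X - _ = _]HS0 (bigID (fun j => simple_agentb Rp Om j)) /= mulr_natl.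
  lra.
rewrite HT.
have [hz|hz] := leP 0%E z.
- rewrite ger0_norm; last first.
    by apply: sumr_ge0 => j /asboolPn hj; rewrite subr_ge0; exact: (NSup j hz hj).1.
  by apply: eq_bigr => j /asboolPn hj; rewrite ger0_norm // subr_ge0; exact: (NSup j hz hj).1.
- rewrite ler0_norm; last first.
    by apply: sumr_le0 => j /asboolPn hj; rewrite subr_le0; exact: (NSdown j (ltW hz) hj).1.
  rewrite -sumrN; apply: eq_bigr => j /asboolPn hj.
  by rewrite ler0_norm // subr_le0; exact: (NSdown j (ltW hz) hj).1.
Qed.


Lemma simp_facts (Rp : profile R n) Om i : simple_rule phi -> economy Rp Om ->
  ((0 <= zexcess Rp Om)%E -> ((phi Rp Om i)%:E <= peak (Rp i))%E /\
      ((phi Rp Om i)%:E = peak (Rp i) \/ Om / n%:R <= phi Rp Om i)) /\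
  ((zexcess Rp Om <= 0)%E -> (peak (Rp i) <= (phi Rp Om i)%:E)%E /\
      ((phi Rp Om i)%:E = peak (Rp i) \/ phi Rp Om i <= Om / n%:R)).
Proof.
move=> [_ H] E; have [HS [nu [Hnu [_ [Hup Hdn]]]]] := H Rp Om E.
have p0 := sp_ge0 (E.1 i).
case: (pselect (simple_agent Rp Om i)) => hs.
  by rewrite (HS i hs); split => _; split => //; left.
have [nu0 nule] := Hnu i hs; split => hz.
- have hp : ((Om / n%:R)%:E <= peak (Rp i))%E.
    by rewrite leNgt; apply/negP => h; apply: hs; left.
  rewrite (Hup hz i hs); split; last by right; lra.
  move: hp nule; case: (peak (Rp i)) => [r| |] //=; last by move=> _ _; rewrite leey.
  rewrite !lee_fin => hp; rewrite ger0_norm ?subr_ge0 // => h; lra.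
- have hp : (peak (Rp i) <= (Om / n%:R)%:E)%E.
    by rewrite leNgt; apply/negP => h; apply: hs; right.
  rewrite (Hdn hz i hs); split; last by right; lra.
  move: p0 hp nule; case: (peak (Rp i)) => [r| |] //=.
  rewrite !lee_fin => _ hp; rewrite ler0_norm ?subr_le0 // => h; lra.
Qed.

Lemma eq_from_le (f x : 'I_n -> R) : (forall k, f k <= x k) ->
  \sum_(k < n) x k = \sum_(k < n) f k -> forall k, x k = f k.
Proof.
move=> hle hs k.
have h0 : \sum_(k < n) (x k - f k) = 0 by rewrite sumrB hs subrr.
have := @psumr_eq0P _ _ predT (fun k => x k - f k) (fun k _ => _) h0 k isT.
by move=> /(_ _) h; apply/eqP; rewrite -subr_eq0; apply/eqP; apply: h => j; rewrite subr_ge0.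
Qed.

Lemma eff_simple : simple_rule phi -> efficient phi.
Proof.
move=> SR Rp Om E [x [x0 [xs [xR [i xi]]]]].
have [_ HS] := Hr E.
have [hz|hz] := leP 0%E (zexcess Rp Om).
- have hle : forall k, phi Rp Om k <= x k.
    move=> k; rewrite leNgt; apply/negP => hlt.
    have [h _] := (simp_facts k SR E).1 hz.
    have [_ /(_ (xR k))] := sp_left (E.1 k) (x0 k) hlt h; done.
  have heq := eq_from_le hle (etrans xs (esym HS)).
  by move: xi; rewrite heq => -[].
- have hle : forall k, x k <= phi Rp Om k.
    move=> k; rewrite leNgt; apply/negP => hlt.
    have [h _] := (simp_facts k SR E).2 (ltW hz).
    have [_ /(_ (xR k))] := sp_right (E.1 k) (phi_ge0 k E) h hlt; done.
  have heq := eq_from_le hle (etrans HS (esym xs)).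
  by move: xi; rewrite -heq => -[].
Qed.

Lemma nom_simple : simple_rule phi -> peak_responsive phi -> NOM phi.
Proof.
move=> SR PR i Q Q' Om Qsp Om0 [[Q'sp _] Hall].
have hn : (0 < n%:R :> R) by rewrite ltr0n (n_gt0 i).
have m0 : 0 <= Om / n%:R by rewrite divr_ge0 // ltW.
pose Rp' := fun _ : 'I_n => Q'.
have E' : economy (upd Rp' i Q') Om by split => // j; rewrite /upd; case: (j == i).
have hpk : forall j, peak (upd Rp' i Q' j) = peak Q' by move=> j; rewrite /upd; case: (j == i).
have hm : phi (upd Rp' i Q') Om i = Om / n%:R.
  apply/eqP; rewrite eq_le avg_le ?avg_ge // => j; by rewrite !hpk.
have [x [[Rp [hsp ->]] hx]] := Hall (Om / n%:R) (ex_intro _ Rp' (conj (fun _ => Q'sp) (esym hm))).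
have E'' : economy (upd Rp i Q) Om by apply: econ_upd.
have x0 := phi_ge0 i E''.
set y := phi (upd Rp i Q) Om i in hx x0.
have [F1 F2] := simp_facts i SR E''.
rewrite /y upd_same in F1 F2; rewrite -/y in F1 F2.
case: hx => _; apply.
have [hz|hz] := leP 0%E (zexcess (upd Rp i Q) Om).
- have [h1 h2] := F1 hz.
  case: (ltgtP y (Om / n%:R)) => hym.
  + have hp : y%:E = peak Q by case: h2 => // /(lt_le_trans hym); rewrite ltxx.
    have hq : (peak Q <= y%:E)%E by rewrite hp.
    by case: (sp_right Qsp x0 hq hym).
  + by case: (sp_left Qsp m0 hym h1).
  + by rewrite hym; apply: sp_refl Qsp _; rewrite lee_fin.
- have [h1 h2] := F2 (ltW hz).
  case: (ltgtP y (Om / n%:R)) => hym.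
  + by case: (sp_right Qsp x0 h1 hym).
  + have hp : y%:E = peak Q by case: h2 => // /(lt_le_trans hym); rewrite ltxx.
    have hq : (y%:E <= peak Q)%E by rewrite hp.
    by case: (sp_left Qsp m0 hym hq).
  + by rewrite hym; apply: sp_refl Qsp _; rewrite lee_fin.
Qed.

End Rule.
End S.

Theorem proposition4 (R : realType) (n : nat) (phi : rule_fun R n) :
  is_rule phi ->
  (own_peak_only phi /\ efficient phi /\ peak_responsive phi /\ NOM phi <->
   simple_rule phi /\ peak_responsive phi).
Proof.
move=> Hr; split.
- by move=> [OPO [EF [PR NM]]]; split => //; exact: forward.
- move=> [SR PR]; split; first exact: SR.1.
  split; first exact: eff_simple.
  by split => //; exact: nom_simple.
Qed.
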